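(* Let $g,\ell$ be kernels on $X$ (with $g_z\ne0$, $\ell_z\ne0$ for all $z$) such that $\ell/g$ is positive semi-definite. Then for every $n\ge2$ and every $n$-point subset $\{\mu_1,\dots,\mu_n\}$ of $X$, $$\mathrm{dist}\big(\hat g_{\mu_1},\mathrm{span}\{\hat g_{\mu_2},\dots,\hat g_{\mu_n}\}\big)\le\mathrm{dist}\big(\hat\ell_{\mu_1},\mathrm{span}\{\hat\ell_{\mu_2},\dots,\hat\ell_{\mu_n}\}\big),$$ the distances being taken in $\mathcal{H}_g$ and $\mathcal{H}_\ell$ respectively.
   Context: A kernel on $X$ is a positive semi-definite function $k:X\times X\to\mathbb{C}$; $\mathcal{H}_k$ its reproducing kernel Hilbert space, $k_w=k(\cdot,w)$, $\hat k_w=k_w/\|k_w\|$. ''$\ell/g$ positive semi-definite'' means $\ell=gh$ for some positive semi-definite kernel $h$ on $X$. *)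

(* Defs.v *)
From HB Require Import structures.
From mathcomp Require Import all_boot all_order all_algebra.
From mathcomp Require Import complex.
From mathcomp Require Import classical_sets reals.
Set Implicit Arguments. Unset Strict Implicit. Unset Printing Implicit Defensive.
Import Order.TTheory GRing.Theory Num.Theory.
Local Open Scope ring_scope.
Local Open Scope classical_set_scope.
Local Open Scope complex_scope.

(* Positive semi-definite kernel k : X -> X -> C:
   sum_{i,j} c_i conj(c_j) k(x_i, x_j) >= 0 (in the order of C, i.e. real and
   nonnegative) for every finite family of points and coefficients. *)
Definition psd_kernel (R : realType) (X : Type) (k : X -> X -> R[i]) : Prop :=
  forall (m : nat) (x : 'I_m -> X) (c : 'I_m -> R[i]),
    0 <= \sum_(i < m) \sum_(j < m) c i * Num.conj (c j) * k (x i) (x j).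

Definition kernel_quotient_psd (R : realType) (X : Type) (ell g : X -> X -> R[i]) : Prop :=
  exists h : X -> X -> R[i], psd_kernel h /\ forall x y, ell x y = g x y * h x y.

(* Squared norm in H_k of  sum_i a_i k_{x_i}:  <k_x, k_y> = k(y, x). *)
Definition kvec_norm2 (R : realType) (X : Type) (k : X -> X -> R[i]) (m : nat)
    (x : 'I_m -> X) (a : 'I_m -> R[i]) : R :=
  complex.Re (\sum_(i < m) \sum_(j < m) a i * Num.conj (a j) * k (x j) (x i)).

(* Normalising factor: hat k_w = k_w / ||k_w||, ||k_w|| = sqrt (k(w,w)). *)
Definition khat_coef (R : realType) (X : Type) (k : X -> X -> R[i]) (w : X) : R[i] :=
  ((Num.sqrt (complex.Re (k w w)))^-1)%:C.

(* dist_{H_k}( hat k_{mu 0}, span { hat k_{mu (lift 0 j)} : j } ), computed as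
   sqrt of the infimum over all elements hat k_{mu 0} + sum_{i>0} a_i hat k_{mu i}
   (the span is finite-dimensional, hence closed). *)
Definition dist_first (R : realType) (X : Type) (k : X -> X -> R[i]) (m : nat)
    (mu : 'I_m.+1 -> X) : R :=
  Num.sqrt (inf [set kvec_norm2 k mu (fun i => a i * khat_coef k (mu i))
                 | a in [set a : 'I_m.+1 -> R[i] | a ord0 = 1]]).

(* Main.v *)
Require Import Defs.
From HB Require Import structures.
From mathcomp Require Import all_boot all_order all_algebra.
From mathcomp Require Import complex.
From mathcomp Require Import classical_sets reals.
From mathcomp Require Import ring.
Import Order.TTheory GRing.Theory Num.Theory.
Local Open Scope ring_scope.
Section Gen.
Variable C : numClosedFieldType.
Variable m : nat.
Implicit Types (B : 'I_m -> 'I_m -> C) (c d : 'I_m -> C).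

Definition sf B c d := \sum_(i < m) \sum_(j < m) c i * (d j)^* * B i j.
Definition psdm B := forall c, 0 <= sf B c c.
Definition ev (p : 'I_m) : 'I_m -> C := fun a => (a == p)%:R.

Lemma sf_ext B B' c d : (forall i j, B i j = B' i j) -> sf B c d = sf B' c d.
Proof. by move=> e; apply: eq_bigr => i _; apply: eq_bigr => j _; rewrite e. Qed.

Lemma sfDl B c c' d : sf B (fun a => c a + c' a) d = sf B c d + sf B c' d.
Proof.
rewrite /sf -big_split /=; apply: eq_bigr => i _; rewrite -big_split /=.
by apply: eq_bigr => j _; ring.
Qed.

Lemma sfDr B c d d' : sf B c (fun a => d a + d' a) = sf B c d + sf B c d'.
Proof.
rewrite /sf -big_split /=; apply: eq_bigr => i _; rewrite -big_split /=.
by apply: eq_bigr => j _; rewrite rmorphD /=; ring.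
Qed.

Lemma sfZl B k c d : sf B (fun a => k * c a) d = k * sf B c d.
Proof.
rewrite /sf mulr_sumr; apply: eq_bigr => i _; rewrite mulr_sumr.
by apply: eq_bigr => j _; ring.
Qed.

Lemma sfZr B k c d : sf B c (fun a => k * d a) = k^* * sf B c d.
Proof.
rewrite /sf mulr_sumr; apply: eq_bigr => i _; rewrite mulr_sumr.
by apply: eq_bigr => j _; rewrite rmorphM /=; ring.
Qed.

Lemma sum_ev (F : 'I_m -> C) p : \sum_i F i * ev p i = F p.
Proof.
rewrite (bigD1 p) //= big1 ?addr0; first by rewrite /ev eqxx mulr1.
by move=> i /negbTE; rewrite /ev => ->; rewrite mulr0.
Qed.

Lemma sum_evl (F : 'I_m -> C) p : \sum_i ev p i * F i = F p.
Proof. by rewrite -(sum_ev F p); apply: eq_bigr => i _; rewrite mulrC. Qed.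

Lemma ev_conj p a : (ev p a)^* = ev p a.
Proof. by rewrite /ev; case: (a == p); rewrite ?rmorph0 ?rmorph1. Qed.

Lemma sf_evr B c p : sf B c (ev p) = \sum_i c i * B i p.
Proof.
apply: eq_bigr => i _.
rewrite -(sum_ev (fun j => c i * B i j)); apply: eq_bigr => j _.
by rewrite ev_conj; ring.
Qed.

Lemma sf_evl B d p : sf B (ev p) d = \sum_j (d j)^* * B p j.
Proof.
rewrite /sf exchange_big /=; apply: eq_bigr => j _.
rewrite -(sum_ev (fun i => (d j)^* * B i j)); apply: eq_bigr => i _.
by ring.
Qed.

Lemma sf_ev B p q : sf B (ev p) (ev q) = B p q.
Proof.
rewrite sf_evl -(sum_ev (fun j => B p j) q); apply: eq_bigr => j _.
by rewrite ev_conj mulrC.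
Qed.

Lemma sf_pair B c d k :
  sf B (fun a => c a + k * d a) (fun a => c a + k * d a) =
  sf B c c + k^* * sf B c d + k * sf B d c + k * k^* * sf B d d.
Proof.
rewrite sfDl !sfDr !sfZl !sfZr; ring.
Qed.

Lemma diag_ge0 B : psdm B -> forall p, 0 <= B p p.
Proof. by move=> hB p; rewrite -sf_ev; apply: hB. Qed.

Lemma herm B : psdm B -> forall i j, B j i = (B i j)^*.
Proof.
move=> hB i j.
have r1 := ger0_real (hB (fun a => ev i a + 1 * ev j a)).
have r2 := ger0_real (hB (fun a => ev i a + 'i * ev j a)).
rewrite sf_pair !sf_ev in r1; rewrite sf_pair !sf_ev in r2.
have ri := ger0_real (diag_ge0 _ hB i).
have rj := ger0_real (diag_ge0 _ hB j).
set x := B i j in r1 r2 *; set y := B j i in r1 r2 *.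
have s1 : (x + y) \is Num.real.
  have -> : x + y = B i i + 1^* * x + 1 * y + 1 * 1^* * B j j - B i i - B j j.
    by rewrite rmorph1; ring.
  by rewrite !rpredB.
have s2 : ('i * (y - x)) \is Num.real.
  have -> : 'i * (y - x) = B i i + 'i^* * x + 'i * y + 'i * 'i^* * B j j - B i i - B j j.
    rewrite conjCi mulrN -expr2 sqrCi; ring.
  by rewrite !rpredB.
move/CrealP: s1; move/CrealP: s2.
rewrite rmorphM rmorphB rmorphD /= conjCi => e2 e1.
have : 2 * y = 2 * x^*.
  have -> : 2 * y = (x + y) - 'i * ('i * (y - x)).
    rewrite mulrA -expr2 sqrCi; ring.
  rewrite -e1 -e2 mulrA mulrN -expr2 sqrCi; ring.
by move/mulfI; apply; rewrite pnatr_eq0.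
Qed.

Lemma zero_row B : psdm B -> forall i j, B j j = 0 -> B i j = 0.
Proof.
move=> hB i j hjj; apply/eqP; apply: contraT => hx.
set x := B i j in hx.
have hy : B j i = x^* by rewrite (herm _ hB i j).
have ri : (B i i)^* = B i i by apply/CrealP; apply: ger0_real; apply: diag_ge0.
have hxc : x^* != 0 by rewrite conjC_eq0.
set k := - (B i i + 1) / (2 * x^*).
have := hB (fun a => ev i a + k * ev j a).
rewrite sf_pair !sf_ev hjj hy.
have -> : k^* = - (B i i + 1) / (2 * x).
  by rewrite /k !(rmorphM, rmorphN, rmorphD, fmorphV) /= rmorph1 ri conjCK.
have -> : B i i + - (B i i + 1) / (2 * x) * x + k * x^* + k * (- (B i i + 1) / (2 * x)) * 0 = -1.
  by rewrite /k; field; apply/andP; split.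
by rewrite oppr_ge0 ler10.
Qed.

Lemma schur_psd B p : psdm B -> B p p != 0 ->
  psdm (fun i j => B i j - B i p * (B j p)^* / B p p).
Proof.
move=> hB hp c.
set u := \sum_i c i * B i p.
have rp : (B p p)^* = B p p by apply/CrealP; apply: ger0_real; apply: diag_ge0.
have e1 : \sum_i \sum_j c i * (c j)^* * (B i p * (B j p)^* / B p p) = u * u^* / B p p.
  rewrite /u rmorph_sum /= big_distrl /= big_distrl /=; apply: eq_bigr => i _.
  rewrite big_distrr /= big_distrl /=; apply: eq_bigr => j _.
  by rewrite rmorphM /=; ring.
have e : sf (fun i j => B i j - B i p * (B j p)^* / B p p) c c = sf B c c - u * u^* / B p p.
  rewrite -e1 /sf -sumrB; apply: eq_bigr => i _; rewrite -sumrB.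
  by apply: eq_bigr => j _; ring.
rewrite e.
have := hB (fun a => c a + (- u / B p p) * ev p a).
rewrite sf_pair sf_ev sf_evr sf_evl -/u.
have -> : \sum_j (c j)^* * B p j = u^*.
  rewrite /u rmorph_sum; apply: eq_bigr => j _.
  by rewrite rmorphM (herm _ hB j p).
have -> : (- u / B p p)^* = - u^* / B p p.
  by rewrite rmorphM rmorphN fmorphV /= rp.
suff -> : sf B c c + - u^* / B p p * u + - u / B p p * u^* + - u / B p p * (- u^* / B p p) * B p p
   = sf B c c - u * u^* / B p p by [].
by field.
Qed.

Lemma decomp_aux t : forall B, psdm B ->
  (forall i j : 'I_m, (t <= i)%N || (t <= j)%N -> B i j = 0) ->
  exists K (w : 'I_K -> C) (v : 'I_K -> 'I_m -> C),
    (forall k, 0 <= w k) /\ (forall i j, B i j = \sum_(k < K) w k * v k i * (v k j)^*).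
Proof.
elim: t => [|t IH] B hB hz.
  exists 0, (fun _ => 0), (fun _ _ => 0); split => // i j.
  by rewrite big_ord0; apply: hz.
case: (ltnP t m) => htm; last first.
  apply: IH => // i j.
  by rewrite leqNgt (leq_trans (ltn_ord i) htm) leqNgt (leq_trans (ltn_ord j) htm).
pose p := Ordinal htm.
have reduce : forall B' : 'I_m -> 'I_m -> C,
    (forall i j : 'I_m, (t.+1 <= i)%N || (t.+1 <= j)%N -> B' i j = 0) ->
    (forall j, B' p j = 0) -> (forall i, B' i p = 0) ->
    forall i j : 'I_m, (t <= i)%N || (t <= j)%N -> B' i j = 0.
  move=> B' h1 h2 h3 i j /orP [] h.
    case: (ltngtP t i) h => // hti _.
      by apply: h1; rewrite hti.
    by have -> : i = p by apply/val_inj.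
  case: (ltngtP t j) h => // htj _.
    by apply: h1; rewrite htj orbT.
  by have -> : j = p by apply/val_inj.
case: (eqVneq (B p p) 0) => hpp.
  apply: IH => //; apply: reduce => //.
    by move=> j; rewrite (herm _ hB j p) (zero_row _ hB j p hpp) rmorph0.
  by move=> i; apply: (zero_row _ hB i p hpp).
have hB' := schur_psd _ _ hB hpp.
have rp : (B p p)^* = B p p by apply/CrealP; apply: ger0_real; apply: diag_ge0.
set B' := fun i j => B i j - B i p * (B j p)^* / B p p.
have z1 : forall i j : 'I_m, (t < i)%N || (t < j)%N -> B' i j = 0.
  move=> i j h; rewrite /B'; case/orP: h => h.
    by rewrite (hz i j) ?h // (hz i p) ?h // mul0r mul0r subr0.
  by rewrite (hz i j) ?h ?orbT // (hz j p) ?h // rmorph0 mulr0 mul0r subr0.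
have z2 : forall j, B' p j = 0.
  by move=> j; rewrite /B' mulrAC divff // mul1r (herm _ hB j p) subrr.
have z3 : forall i, B' i p = 0.
  by move=> i; rewrite /B' rp mulfK // subrr.
have [K [w [v [hw hd]]]] := IH _ hB' (reduce _ z1 z2 z3).
exists K.+1, (fun k => if unlift ord0 k is Some k' then w k' else (B p p)^-1),
  (fun k i => if unlift ord0 k is Some k' then v k' i else B i p).
split.
  move=> k; case: unliftP => [k' _|_]; first by apply: hw.
  by rewrite invr_ge0; apply: diag_ge0.
move=> i j; rewrite big_ord_recl /= unlift_none.
under eq_bigr => k _ do rewrite liftK.
by rewrite -hd /B'; field.
Qed.

Lemma decomp B : psdm B ->
  exists K (w : 'I_K -> C) (v : 'I_K -> 'I_m -> C),
    (forall k, 0 <= w k) /\ (forall i j, B i j = \sum_(k < K) w k * v k i * (v k j)^*).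
Proof.
move=> hB; apply: (decomp_aux m) => // i j.
by rewrite leqNgt ltn_ord leqNgt ltn_ord.
Qed.

Lemma schur_prod A B : psdm A -> psdm B -> psdm (fun i j => A i j * B i j).
Proof.
move=> hA hB c; have [K [w [v [hw hd]]]] := decomp _ hB.
have -> : sf (fun i j => A i j * B i j) c c =
    \sum_(k < K) w k * sf A (fun a => c a * v k a) (fun a => c a * v k a).
  rewrite /sf.
  transitivity (\sum_(i < m) \sum_(j < m) \sum_(k < K) c i * (c j)^* * A i j * (w k * v k i * (v k j)^*)).
    apply eq_bigr => i _; apply eq_bigr => j _; rewrite hd mulr_sumr mulr_sumr.
    by apply: eq_bigr => k _; ring.
  under eq_bigr => i _ do rewrite exchange_big.
  rewrite exchange_big /=; apply: eq_bigr => k _; rewrite mulr_sumr.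
  apply: eq_bigr => i _; rewrite mulr_sumr; apply: eq_bigr => j _.
  by rewrite rmorphM; ring.
by apply: sumr_ge0 => k _; apply: mulr_ge0 => //; apply: hA.
Qed.

Lemma sf_subev B k p c d :
  sf (fun i j => B i j - k * ev p i * ev p j) c d = sf B c d - k * c p * (d p)^*.
Proof.
have e : \sum_i \sum_j c i * (d j)^* * (k * ev p i * ev p j) = k * c p * (d p)^*.
  transitivity (\sum_i (c i * (d p)^* * k) * ev p i).
    apply: eq_bigr => i _.
    rewrite -(sum_ev (fun j => c i * (d j)^* * k * ev p i) p).
    by apply: eq_bigr => j _; ring.
  by rewrite sum_ev; ring.
rewrite /sf -e -sumrB; apply: eq_bigr => i _; rewrite -sumrB.
by apply: eq_bigr => j _; ring.
Qed.
End Gen.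
Arguments sf {C m}. Arguments psdm {C m}. Arguments ev {C m}.
Arguments sf_ext {C m}. Arguments sfZl {C m}. Arguments sfZr {C m}.
Arguments sf_subev {C m}. Arguments diag_ge0 {C m}. Arguments zero_row {C m}.
Arguments schur_prod {C m}.

Lemma psd_pts (R : realType) (X : Type) (k : X -> X -> R[i]) :
  psd_kernel k -> forall m (f : 'I_m -> X), psdm (fun i j => k (f i) (f j)).
Proof. by move=> hk m f c; apply: hk. Qed.

Lemma psd_ptsT (R : realType) (X : Type) (k : X -> X -> R[i]) :
  psd_kernel k -> forall m (f : 'I_m -> X), psdm (fun i j => k (f j) (f i)).
Proof.
move=> hk m f c; have H := hk m f (fun a => (c a)^*).
suff -> : sf (fun i j => k (f j) (f i)) c c =
  \sum_(i < m) \sum_(j < m) (c i)^* * (c j)^*^* * k (f i) (f j) by [].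
rewrite /sf exchange_big; apply: eq_bigr => i _; apply: eq_bigr => j _.
by rewrite conjCK (mulrC (c j)).
Qed.

Arguments psd_pts {R X k}. Arguments psd_ptsT {R X k}.

Lemma diag_pos (R : realType) (X : Type) (k : X -> X -> R[i]) :
  psd_kernel k -> (forall z, exists x, k x z != 0) ->
  forall z, k z z = (complex.Re (k z z))%:C%C /\ 0 < complex.Re (k z z).
Proof.
move=> hk h0 z; have [x hx] := h0 z.
pose f : 'I_2 -> X := fun i => if i == ord0 then x else z.
have hB := psd_pts hk 2 f.
have ge : 0 <= k z z by have := diag_ge0 _ hB ord_max; rewrite /f /=.
have ne : k z z != 0.
  apply: contra hx => /eqP h; apply/eqP.
  by have := zero_row _ hB ord0 ord_max; rewrite /f /=; apply.
move: ge ne; case: (k z z) => a b; rewrite lecE /= => /andP [/eqP -> ha] hne.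
split => //.
rewrite lt_neqAle ha andbT eq_sym; apply: contra hne => /eqP ->.
by [].
Qed.

Lemma conj_khat (R : realType) (X : Type) (k : X -> X -> R[i]) w :
  (khat_coef k w)^* = khat_coef k w.
Proof. by rewrite /khat_coef; exact: conjc_real. Qed.

Arguments conj_khat {R X}.

Lemma kvec_sf (R : realType) (X : Type) (k : X -> X -> R[i]) m (mu : 'I_m -> X) a :
  kvec_norm2 k mu (fun i => a i * khat_coef k (mu i)) =
  complex.Re (sf (fun i j => khat_coef k (mu i) * khat_coef k (mu j) * k (mu j) (mu i)) a a).
Proof.
rewrite /kvec_norm2 /sf; congr complex.Re; apply: eq_bigr => i _; apply: eq_bigr => j _.
by rewrite rmorphM /= conj_khat; ring.
Qed.

Lemma psd_scaled (R : realType) (X : Type) (k : X -> X -> R[i]) :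
  psd_kernel k -> forall m (mu : 'I_m -> X) (r : 'I_m -> R[i]),
  (forall i, (r i)^* = r i) -> psdm (fun i j => r i * r j * k (mu j) (mu i)).
Proof.
move=> hk m mu r hr c; have := psd_ptsT hk m mu (fun a => c a * r a).
suff -> : sf (fun i j => r i * r j * k (mu j) (mu i)) c c =
  sf (fun i j => k (mu j) (mu i)) (fun a => c a * r a) (fun a => c a * r a) by [].
rewrite /sf; apply: eq_bigr => i _; apply: eq_bigr => j _.
by rewrite rmorphM /= hr; ring.
Qed.
Arguments psd_scaled {R X k}. Arguments diag_pos {R X k}.

Theorem lemma4p8 (R : realType) (X : Type) (g ell : X -> X -> R[i])
  (hg : psd_kernel g) (hl : psd_kernel ell)
  (hg0 : forall z : X, exists x : X, g x z != 0)
  (hl0 : forall z : X, exists x : X, ell x z != 0)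
  (hq : kernel_quotient_psd ell g)
  (n : nat) (mu : 'I_n.+2 -> X) (hmu : injective mu) :
  dist_first g mu <= dist_first ell mu.
Proof.
pose Gh := fun i j : 'I_n.+2 => khat_coef g (mu i) * khat_coef g (mu j) * g (mu j) (mu i).
pose Lh := fun i j : 'I_n.+2 => khat_coef ell (mu i) * khat_coef ell (mu j) * ell (mu j) (mu i).
have hGh : psdm Gh := psd_scaled hg _ mu _ (fun i => conj_khat g (mu i)).
rewrite /dist_first.
set Sg := (X in Num.sqrt (inf X) <= _).
set Sl := (X in _ <= Num.sqrt (inf X)).
set dg := inf Sg.
have hlb : forall x, Sg x -> 0 <= x.
  move=> x [a _ <-]; rewrite kvec_sf; have := hGh a.
  by rewrite lecE /= => /andP [_ ->].
have hinf : forall a, a ord0 = 1 -> dg <= complex.Re (sf Gh a a).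
  move=> a ha; apply: (ge_inf (E := Sg)); first by exists 0.
  by exists a => //; rewrite kvec_sf.
have hM : psdm (fun i j => Gh i j - dg%:C%C * ev ord0 i * ev ord0 j).
  move=> c; rewrite sf_subev.
  case: (eqVneq (c ord0) 0) => h0.
    by rewrite h0 mulr0 mul0r subr0; apply: hGh.
  pose a := fun i => (c ord0)^-1 * c i.
  have ha : a ord0 = 1 by rewrite /a mulVf.
  have hN : c ord0 * (c ord0)^* != 0 by rewrite mulf_neq0 // conjC_eq0.
  have e : sf Gh a a = (c ord0 * (c ord0)^*)^-1 * sf Gh c c.
    by rewrite /a sfZl sfZr fmorphV invfM; ring.
  have hq2 : sf Gh c c = (c ord0 * (c ord0)^*) * sf Gh a a.
    by rewrite e mulrA mulfV ?mul1r.
  have hd : dg%:C%C <= sf Gh a a.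
    have := hGh a; rewrite !lecE /= => /andP [/eqP hi _].
    by rewrite -hi eqxx /=; apply: hinf.
  rewrite hq2.
  have -> : c ord0 * (c ord0)^* * sf Gh a a - dg%:C%C * c ord0 * (c ord0)^* =
     c ord0 * (c ord0)^* * (sf Gh a a - dg%:C%C) by ring.
  by apply: mulr_ge0; [apply: mul_conjC_ge0 | rewrite subr_ge0].
have [h [hh hq']] := hq.
pose r := fun i : 'I_n.+2 => (Num.sqrt (complex.Re (g (mu i) (mu i))) /
   Num.sqrt (complex.Re (ell (mu i) (mu i))))%:C%C.
have hr : forall i, (r i)^* = r i by move=> i; exact: conjc_real.
pose Hh := fun i j => r i * r j * h (mu j) (mu i).
have hHh : psdm Hh := psd_scaled hh _ mu r hr.
have hsr : forall i, khat_coef g (mu i) * r i = khat_coef ell (mu i).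
  move=> i; have [_ pg] := diag_pos hg hg0 (mu i); have [_ pl] := diag_pos hl hl0 (mu i).
  rewrite /khat_coef /r -rmorphM /=; congr (_%:C%C).
  have : 0 < Num.sqrt (complex.Re (g (mu i) (mu i))) by rewrite sqrtr_gt0.
  by move/lt0r_neq0 => hs; rewrite mulrA mulVf ?mul1r.
have hH00 : Hh ord0 ord0 = 1.
  have [eg pg] := diag_pos hg hg0 (mu ord0); have [el pl] := diag_pos hl hl0 (mu ord0).
  move: eg el pg pl; set A := complex.Re _; set B := complex.Re _ => eg el pg pl.
  have e1 : B%:C%C = A%:C%C * h (mu ord0) (mu ord0) by rewrite -el -eg hq'.
  have e2 : r ord0 * r ord0 = (A / B)%:C%C.
    rewrite /r -rmorphM /= -/A -/B; congr (_%:C%C).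
    by rewrite -expr2 expr_div_n !sqr_sqrtr // ltW.
  rewrite /Hh e2 rmorphM fmorphV /= mulrAC -e1 mulfV //.
  by rewrite fmorph_eq0 lt0r_neq0.
have hprod : forall i j, (Gh i j - dg%:C%C * ev ord0 i * ev ord0 j) * Hh i j =
    Lh i j - dg%:C%C * ev ord0 i * ev ord0 j.
  move=> i j; rewrite mulrBl; congr (_ - _).
    by rewrite /Gh /Hh /Lh hq' -hsr -hsr; ring.
  rewrite /ev; case: eqP => [-> | _]; case: eqP => [-> | _]; rewrite /= ?hH00; ring.
have hS : psdm (fun i j => Lh i j - dg%:C%C * ev ord0 i * ev ord0 j).
  by move=> c; rewrite -(sf_ext _ _ c c hprod); exact: (schur_prod _ _ hM hHh c).
have hl_ge : forall a, a ord0 = 1 -> dg <= complex.Re (sf Lh a a).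
  move=> a ha; have := hS a; rewrite sf_subev ha rmorph1 !mulr1 subr_ge0 lecE /=.
  by case/andP.
have : dg <= inf Sl.
  apply: lb_le_inf.
    by exists (kvec_norm2 ell mu (fun i => (fun _ => 1) i * khat_coef ell (mu i))); exists (fun _ => 1).
  by move=> y [a ha <-]; rewrite kvec_sf; apply: hl_ge.
by move/ler_wsqrtr.
Qed.
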